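(* For every nonzero integer $n$, $B_n<0.65\log|n|+2.24$. That is, if $S$ is any set of positive integers with the property $D(n)$, then the number of elements $x\in S$ with $n^2<x<|n|^3$ is less than $0.65\log|n|+2.24$.
   Context: Let $n$ be a nonzero integer. A set of positive integers $S$ has the property $D(n)$ if $xy+n$ is a perfect square for all distinct $x,y\in S$. Define $B_n=\sup\{|S\cap(n^2,|n|^3)| : S \text{ has the property } D(n)\}$. Here $\log$ is the natural logarithm. *)

(* Defs.v *)
From Stdlib Require Import ZArith Reals List.
Open Scope Z_scope.

Definition is_square (x : Z) : Prop := exists k : Z, x = k * k.

Definition has_property_D (n : Z) (S : Z -> Prop) : Prop :=
  (forall x, S x -> 0 < x) /\
  (forall x y, S x -> S y -> x <> y -> is_square (x * y + n)).

(* Main.v *)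
Require Import Defs.
From Stdlib Require Import ZArith Reals List.
From Stdlib Require Import Lia Psatz Lra Sorting.Sorted Sorting.Mergesort Orders Permutation.

Open Scope Z_scope.

Lemma id1 n a c d r s t e : r*r = a*c+n -> s*s = a*d+n -> t*t = c*d+n ->
  e = n*(a+c+d) + 2*a*c*d - 2*(r*s*t) ->
  a*e + n*n = (a*t - r*s)*(a*t-r*s).
Proof.
  intros Hr Hs Ht He.
  assert (H: (a*t - r*s)*(a*t-r*s) = a*a*(t*t) - 2*a*(r*s*t) + (r*r)*(s*s)) by ring.
  rewrite H, Hr, Hs, Ht, He. ring.
Qed.

Lemma e_nonneg n a e : n*n < a -> 0 <= a*e + n*n -> 0 <= e.
Proof.
  intros ha H.
  assert (0 <= n*n) by apply Z.square_nonneg.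
  assert (H1: 0 < a*(e+1)) by (rewrite Z.mul_add_distr_l; lia).
  assert (0 < e + 1) by (apply (Z.mul_pos_cancel_l a); lia). lia.
Qed.

Lemma id3 n a c d r s t e : r*r = a*c+n -> s*s = a*d+n -> t*t = c*d+n ->
  e = n*(a+c+d) + 2*a*c*d - 2*(r*s*t) ->
  n*n*((d-a-c)*(d-a-c) - 4*(r*r)) = e*(e + 4*(r*s*t)).
Proof.
  intros Hr Hs Ht He.
  assert (H: e*(e + 4*(r*s*t)) = (n*(a+c+d) + 2*a*c*d)*(n*(a+c+d) + 2*a*c*d) - 4*((r*r)*(s*s)*(t*t))) by (rewrite He; ring).
  rewrite H, Hr, Hs, Ht. ring.
Qed.

Lemma cancel_nonneg p q : 0 < p -> 0 <= p*q -> 0 <= q.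
Proof. intros. destruct (Z_lt_le_dec q 0); [|lia]. nia. Qed.

Lemma sq_ge n a c d r s t e : n <> 0 -> 0 <= r -> 0 <= s -> 0 <= t -> 0 <= e ->
  n*n*((d-a-c)*(d-a-c) - 4*(r*r)) = e*(e + 4*(r*s*t)) ->
  4*(r*r) <= (d-a-c)*(d-a-c).
Proof.
  intros hn hr hs ht he H.
  assert (0 <= r*s*t) by (apply Z.mul_nonneg_nonneg; [apply Z.mul_nonneg_nonneg|]; lia).
  assert (0 <= e*(e + 4*(r*s*t))) by (apply Z.mul_nonneg_nonneg; lia).
  assert (0 < n*n) by (destruct (Z_lt_le_dec n 0); nia).
  assert (0 <= (d-a-c)*(d-a-c) - 4*(r*r)); [|lia].
  apply (cancel_nonneg (n*n)); lia.
Qed.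

Lemma sqrt_le x y : 0 <= x -> 0 <= y -> x*x <= y*y -> x <= y.
Proof. intros. destruct (Z_lt_le_dec y x); [|lia]. nia. Qed.

Lemma dac_nonneg n a c d r : n <> 0 -> n*n < a -> a < c -> c < d -> 0 <= r ->
  r*r = a*c+n -> 4*(r*r) <= (d-a-c)*(d-a-c) -> 0 <= d - a - c.
Proof.
  intros hn ha hac hcd hr Hr H.
  destruct (Z_lt_le_dec (d-a-c) 0) as [Hneg|]; [|lia].
  exfalso.
  assert (H1: 2*r <= a + c - d) by (apply sqrt_le; nia).
  assert (H2: 2*r < a) by lia.
  assert (H3: (2*r)*(2*r) < a*a) by nia.
  assert (Hn: 1 <= n*n) by (destruct (Z_lt_le_dec n 0); nia).
  assert (Habs: Z.abs n <= n*n) by (destruct (Z_lt_le_dec n 0); [rewrite Z.abs_neq|rewrite Z.abs_eq]; nia).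
  assert (H4: a*a < a*c) by nia.
  assert (H5: -n <= Z.abs n) by lia.
  assert (H6: n*n*c < a*c) by nia.
  assert (H7: 2 <= c) by lia.
  nia.
Qed.


Lemma sq_pos n : n <> 0 -> 1 <= n*n.
Proof. intros. destruct (Z_lt_le_dec n 0); nia. Qed.
Lemma abs_le_sq n : Z.abs n <= n*n.
Proof. destruct (Z_lt_le_dec n 0); [rewrite Z.abs_neq|rewrite Z.abs_eq]; nia. Qed.

Lemma F1l n a c : n*n < a -> n*n < c -> n*n*c <= a*c+n.
Proof. intros. pose proof (abs_le_sq n). assert (-n <= Z.abs n) by lia. nia. Qed.
Lemma F3l n c d : n*n < c -> c < d -> c*(d-1) <= c*d+n.
Proof. intros. pose proof (abs_le_sq n). assert (-n <= Z.abs n) by lia. nia. Qed.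

Lemma final_ineq nn c d X rst D : 1 <= nn -> 0 <= rst -> 1 <= c -> c < d -> X = d - c -> d <= 5*c ->
  0 <= D <= X ->
  4*rst < nn*(D*D) ->
  (nn*c)*(nn*d)*(c*(d-1)) <= rst*rst -> False.
Proof.
  intros Hnn Hrst Hc Hcd HX Hle HD H2 P.
  assert (H3: 4*rst < nn*(X*X)).
  { assert (D*D <= X*X) by nia. nia. }
  assert (H4: (4*rst)*(4*rst) < (nn*(X*X))*(nn*(X*X))) by nia.
  assert (H5': X*X <= 16*(c*c)) by nia.
  assert (H6: X*X <= d*(d-1)) by nia.
  assert (H7: (X*X)*(X*X) <= (16*(c*c))*(d*(d-1))) by (apply Z.mul_le_mono_nonneg; nia).
  assert (H9: (nn*(X*X))*(nn*(X*X)) <= 16*((nn*c)*(nn*d)*(c*(d-1)))).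
  { replace ((nn*(X*X))*(nn*(X*X))) with ((nn*nn)*((X*X)*(X*X))) by ring.
    replace (16*((nn*c)*(nn*d)*(c*(d-1)))) with ((nn*nn)*((16*(c*c))*(d*(d-1)))) by ring.
    apply Z.mul_le_mono_nonneg_l; nia. }
  lia.
Qed.

Lemma e1_gap n a c d r s t e : n <> 0 -> n*n < a -> a < c -> c < d ->
  0 <= r -> 0 <= s -> 0 <= t ->
  r*r = a*c+n -> s*s = a*d+n -> t*t = c*d+n -> 0 <= d - a - c ->
  n*n*((d-a-c)*(d-a-c) - 4*(r*r)) = e*(e + 4*(r*s*t)) ->
  1 <= e -> 5*c < d.
Proof.
  intros hn ha hac hcd hr hs ht Hr Hs Ht Hdac H He1.
  assert (Hrst: 0 <= r*s*t) by (apply Z.mul_nonneg_nonneg; [apply Z.mul_nonneg_nonneg|]; lia).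
  pose proof (sq_pos n hn) as Hn2.
  assert (Hee: 1 + 4*(r*s*t) <= e*(e + 4*(r*s*t))).
  { clear -He1 Hrst. nia. }
  assert (Hrr: 0 <= r*r) by apply Z.square_nonneg.
  assert (Hnr: 0 <= n*n*(r*r)) by (apply Z.mul_nonneg_nonneg; lia).
  assert (H2: 4*(r*s*t) < n*n*((d-a-c)*(d-a-c))).
  { rewrite Z.mul_sub_distr_l in H. lia. }
  assert (F1: n*n*c <= a*c+n) by (apply F1l; lia).
  assert (F2: n*n*d <= a*d+n) by (apply F1l; lia).
  assert (F3: c*(d-1) <= c*d+n) by (apply F3l; lia).
  assert (P: (n*n*c)*(n*n*d)*(c*(d-1)) <= (r*s*t)*(r*s*t)).
  { replace ((r*s*t)*(r*s*t)) with ((r*r)*(s*s)*(t*t)) by ring.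
    rewrite Hr, Hs, Ht.
    assert (0 < c) by lia. assert (0 < d) by lia.
    assert (0 <= n*n*c) by (apply Z.mul_nonneg_nonneg; lia).
    assert (0 <= n*n*d) by (apply Z.mul_nonneg_nonneg; lia).
    apply Z.mul_le_mono_nonneg; [| |apply Z.mul_nonneg_nonneg; lia|exact F3].
    - apply Z.mul_nonneg_nonneg; lia.
    - apply Z.mul_le_mono_nonneg; [lia|exact F1|lia|exact F2]. }
  destruct (Z_lt_le_dec (5*c) d) as [|Hle]; [assumption|exfalso].
  apply (final_ineq (n*n) c d (d-c) (r*s*t) (d-a-c)); try lia.
Qed.

Lemma sq_eq_root x y : 0 <= x -> 0 <= y -> x*x = y*y -> x = y.
Proof. intros. apply Z.le_antisymm; apply sqrt_le; lia. Qed.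

Lemma triple_facts n a c d r s t : n <> 0 -> n*n < a -> a < c -> c < d ->
  0 <= r -> 0 <= s -> 0 <= t ->
  r*r = a*c+n -> s*s = a*d+n -> t*t = c*d+n ->
  (d = a + c + 2*r \/ 5*c < d) /\ 2*r <= d - a - c.
Proof.
  intros hn ha hac hcd hr hs ht Hr Hs Ht.
  set (e := n*(a+c+d) + 2*a*c*d - 2*(r*s*t)).
  assert (H1 := id1 n a c d r s t e Hr Hs Ht eq_refl).
  assert (He : 0 <= e).
  { apply (e_nonneg n a e ha). rewrite H1. apply Z.square_nonneg. }
  assert (H3 := id3 n a c d r s t e Hr Hs Ht eq_refl).
  assert (Hsq := sq_ge n a c d r s t e hn hr hs ht He H3).
  assert (Hnn := dac_nonneg n a c d r hn ha hac hcd hr Hr Hsq).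
  split.
  - destruct (Z.eq_dec e 0) as [E0|E1].
    + left. rewrite E0 in H3. rewrite Z.mul_0_l in H3.
      apply Z.mul_eq_0 in H3. destruct H3 as [H3|H3].
      * exfalso. pose proof (sq_pos n hn). lia.
      * assert (d - a - c = 2*r); [|lia].
        apply sq_eq_root; lia.
    + right. apply (e1_gap n a c d r s t e); auto; lia.
  - apply sqrt_le; lia.
Qed.

Lemma abs_sq k : Z.abs k * Z.abs k = k*k.
Proof. destruct (Z.abs_spec k) as [[_ ->]|[_ ->]]; ring. Qed.

Lemma root n S x y : has_property_D n S -> S x -> S y -> x <> y ->
  exists r, 0 <= r /\ r*r = x*y+n.
Proof.
  intros [_ HD] Hx Hy Hxy. destruct (HD x y Hx Hy Hxy) as [k Hk].
  exists (Z.abs k). split; [lia|]. rewrite abs_sq. lia.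
Qed.

Lemma step n S a b c d : n <> 0 -> has_property_D n S ->
  S a -> S b -> S c -> S d -> n*n < a -> a < b -> b < c -> c < d -> 5*c < d.
Proof.
  intros hn HD Sa Sb Sc Sd ha hab hbc hcd.
  destruct (root n S a c HD Sa Sc ltac:(lia)) as [r1 [Hr1 Er1]].
  destruct (root n S a d HD Sa Sd ltac:(lia)) as [s1 [Hs1 Es1]].
  destruct (root n S c d HD Sc Sd ltac:(lia)) as [t [Ht Et]].
  destruct (root n S b c HD Sb Sc ltac:(lia)) as [r2 [Hr2 Er2]].
  destruct (root n S b d HD Sb Sd ltac:(lia)) as [s2 [Hs2 Es2]].
  destruct (triple_facts n a c d r1 s1 t hn ha ltac:(lia) hcd Hr1 Hs1 Ht Er1 Es1 Et) as [[E1|G] _]; [|exact G].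
  destruct (triple_facts n b c d r2 s2 t hn ltac:(lia) hbc hcd Hr2 Hs2 Ht Er2 Es2 Et) as [[E2|G] _]; [|exact G].
  exfalso.
  assert (0 < c) by (pose proof (Z.square_nonneg n); lia).
  assert (r1*r1 < r2*r2) by nia.
  assert (r1 < r2).
  { destruct (Z_lt_le_dec r1 r2); [assumption|]. nia. }
  lia.
Qed.

Lemma base n S a b c : n <> 0 -> has_property_D n S ->
  S a -> S b -> S c -> n*n < a -> a < b -> b < c -> 4*(n*n) < c.
Proof.
  intros hn HD Sa Sb Sc ha hab hbc.
  destruct (root n S a b HD Sa Sb ltac:(lia)) as [r [Hr Er]].
  destruct (root n S a c HD Sa Sc ltac:(lia)) as [s [Hs Es]].
  destruct (root n S b c HD Sb Sc ltac:(lia)) as [t [Ht Et]].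
  destruct (triple_facts n a b c r s t hn ha hab hbc Hr Hs Ht Er Es Et) as [_ G].
  pose proof (abs_le_sq n) as Habs.
  pose proof (Z.square_nonneg n) as Hn0.
  assert (Hab: (n*n+1)*(n*n+2) <= a*b) by (apply Z.mul_le_mono_nonneg; lia).
  assert (Hrr: (n*n)*(n*n) < r*r) by nia.
  assert (n*n < r).
  { destruct (Z_lt_le_dec (n*n) r); [assumption|]. nia. }
  lia.
Qed.

Lemma chain n S a b : n <> 0 -> has_property_D n S -> S a -> S b -> n*n < a -> a < b ->
  forall L c B, StronglySorted Z.lt (c::L) ->
  (forall x, In x (c::L) -> S x /\ b < x) -> 0 <= B -> B < c ->
  exists z, In z (c::L) /\ B * 5^(Z.of_nat (length L)) < z.
Proof.
  intros hn HD Sa Sb ha hab L. induction L as [|d L IH]; intros c B Hs Hin HB HBc.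
  - exists c. split; [left; reflexivity|]. simpl. lia.
  - apply StronglySorted_inv in Hs. destruct Hs as [Hs Hf].
    inversion Hf as [|? ? Hcd _]; subst.
    destruct (Hin c (or_introl eq_refl)) as [Sc Hbc].
    destruct (Hin d (or_intror (or_introl eq_refl))) as [Sd Hbd].
    assert (G := step n S a b c d hn HD Sa Sb Sc Sd ha hab Hbc Hcd).
    destruct (IH d (5*B) Hs (fun x H => Hin x (or_intror H)) ltac:(lia) ltac:(lia)) as [z [Hz1 Hz2]].
    exists z. split; [right; exact Hz1|].
    simpl length. rewrite Nat2Z.inj_succ, Z.pow_succ_r by lia. lia.
Qed.

Module ZLe <: Orders.TotalLeBool'.
  Definition t := Z.
  Definition leb := Z.leb.
  Theorem leb_total : forall x y : t, leb x y = true \/ leb y x = true.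
  Proof. intros x y. unfold leb. destruct (Z.leb_spec x y); [left|right]; auto; apply Z.leb_le; lia. Qed.
End ZLe.
Module ZSort := Sort ZLe.

Lemma ss_lt (s : list Z) : StronglySorted (fun x y => is_true (ZLe.leb x y)) s -> NoDup s ->
  StronglySorted Z.lt s.
Proof.
  induction s as [|a s IH]; intros H Hn; [constructor|].
  apply StronglySorted_inv in H. destruct H as [H1 H2].
  inversion Hn; subst. constructor; [apply IH; auto|].
  rewrite Forall_forall in *. intros x Hx. specialize (H2 x Hx).
  unfold is_true, ZLe.leb in H2. apply Z.leb_le in H2.
  assert (a <> x) by (intro; subst; contradiction). lia.
Qed.

Open Scope R_scope.

Lemma exp_mul_nat (m : nat) x : exp (INR m * x) = exp x ^ m.
Proof.
  induction m as [|m IH]; simpl pow.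
  - simpl. rewrite Rmult_0_l. apply exp_0.
  - rewrite S_INR, Rmult_plus_distr_r, Rmult_1_l, exp_plus, IH. ring.
Qed.

Lemma exp_small : exp (1/20) <= 20/19.
Proof.
  pose proof (exp_ineq1_le (-(1/20))) as H.
  pose proof (exp_pos (-(1/20))) as Hp.
  assert (E : exp (1/20) * exp (-(1/20)) = 1).
  { rewrite <- exp_plus. replace (1/20 + - (1/20)) with 0 by ring. apply exp_0. }
  pose proof (exp_pos (1/20)). nra.
Qed.

Lemma exp_bound (m : nat) : exp (INR m / 20) <= (20/19)^m.
Proof.
  replace (INR m / 20) with (INR m * (1/20)) by (unfold Rdiv; ring).
  rewrite exp_mul_nat. apply pow_incr. split; [left; apply exp_pos|apply exp_small].
Qed.

Lemma ln4 : 6/5 < ln 4.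
Proof.
  pose proof (exp_bound 24) as H. replace (INR 24 / 20) with (6/5) in H by (simpl; lra).
  assert (exp (6/5) < 4) by (assert ((20/19)^24 < 4) by lra; lra).
  rewrite <- (ln_exp (6/5)). apply ln_increasing; [apply exp_pos|assumption].
Qed.

Lemma ln5 : 31/20 < ln 5.
Proof.
  pose proof (exp_bound 31) as H. replace (INR 31 / 20) with (31/20) in H by (simpl; lra).
  assert (exp (31/20) < 5) by (assert ((20/19)^31 < 5) by lra; lra).
  rewrite <- (ln_exp (31/20)). apply ln_increasing; [apply exp_pos|assumption].
Qed.

Lemma real_final (N : Z) (k : nat) : (4 * 5^(Z.of_nat k) < N)%Z ->
  INR (S (S (S k))) < 0.65 * ln (IZR N) + 2.24.
Proof.
  intro H.
  assert (HR : 4 * 5^k < IZR N).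
  { apply IZR_lt in H. rewrite mult_IZR, <- pow_IZR in H. exact H. }
  assert (Hp : 0 < 4 * 5^k) by (apply Rmult_lt_0_compat; [lra|apply pow_lt; lra]).
  pose proof (ln_increasing _ _ Hp HR) as Hl.
  rewrite ln_mult, ln_pow in Hl by (try apply pow_lt; lra).
  pose proof ln4. pose proof ln5. pose proof (pos_INR k).
  assert (INR k * (31/20) <= INR k * ln 5) by (apply Rmult_le_compat_l; lra).
  rewrite !S_INR. lra.
Qed.

Lemma ln_nonneg (N : Z) : (1 <= N)%Z -> 0 <= ln (IZR N).
Proof.
  intro H. destruct (Z.eq_dec N 1) as [->|Hne].
  - rewrite ln_1. lra.
  - left. rewrite <- ln_1. apply ln_increasing; [lra|]. apply IZR_lt. lia.
Qed.

Close Scope R_scope.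

Theorem theorem2 (n : Z) (S : Z -> Prop) :
  n <> 0%Z ->
  has_property_D n S ->
  forall l : list Z,
    NoDup l ->
    (forall x, In x l -> S x /\ (n * n < x)%Z /\ (x < Z.abs n ^ 3)%Z) ->
    (INR (length l) < 0.65 * ln (IZR (Z.abs n)) + 2.24)%R.
Proof.
  intros hn HD l Hnd Hin.
  set (s := ZSort.sort l).
  assert (Hperm : Permutation l s) by apply ZSort.Permuted_sort.
  assert (Hlen : length l = length s) by (apply Permutation_length; exact Hperm).
  assert (Hins : forall x, In x s -> S x /\ (n * n < x)%Z /\ (x < Z.abs n ^ 3)%Z).
  { intros x Hx. apply Hin. apply (Permutation_in x (Permutation_sym Hperm) Hx). }
  assert (Hss : StronglySorted Z.lt s).
  { apply ss_lt.
    - apply Sorted_StronglySorted; [|apply Sorted_LocallySorted_iff; apply ZSort.LocallySorted_sort].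
      intros x y z H1 H2. unfold is_true, ZLe.leb in *. apply Z.leb_le in H1, H2. apply Z.leb_le. lia.
    - apply (Permutation_NoDup Hperm Hnd). }
  rewrite Hlen. clearbody s.
  assert (HN : (1 <= Z.abs n)%Z) by lia.
  pose proof (ln_nonneg _ HN) as Hln.
  destruct s as [|a [|b [|c L]]].
  - simpl. lra.
  - simpl. lra.
  - simpl. lra.
  - apply StronglySorted_inv in Hss. destruct Hss as [Hss1 Hf1].
    apply StronglySorted_inv in Hss1. destruct Hss1 as [Hss2 Hf2].
    rewrite Forall_forall in Hf1, Hf2.
    assert (hab : (a < b)%Z) by (apply Hf1; left; reflexivity).
    assert (hbc : (b < c)%Z) by (apply Hf2; left; reflexivity).
    destruct (Hins a ltac:(simpl; tauto)) as [Sa [ha _]].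
    destruct (Hins b ltac:(simpl; tauto)) as [Sb _].
    destruct (Hins c ltac:(simpl; tauto)) as [Sc _].
    assert (Hc := base n S a b c hn HD Sa Sb Sc ha hab hbc).
    assert (Hall : forall x, In x (c::L) -> S x /\ (b < x)%Z).
    { intros x Hx. split; [apply (Hins x); simpl; tauto|]. apply Hf2. exact Hx. }
    assert (Hn0 := Z.square_nonneg n).
    destruct (chain n S a b hn HD Sa Sb ha hab L c (4*(n*n)) Hss2 Hall ltac:(lia) Hc) as [z [Hz1 Hz2]].
    destruct (Hins z ltac:(simpl; tauto)) as [_ [_ Hz3]].
    assert (Hk : (4 * 5^(Z.of_nat (length L)) < Z.abs n)%Z).
    { assert (E : n*n = Z.abs n * Z.abs n) by (rewrite abs_sq; reflexivity).
      rewrite E in Hz2.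
      assert (E3 : Z.abs n ^ 3 = Z.abs n * Z.abs n * Z.abs n) by ring.
      rewrite E3 in Hz3.
      set (P := 5^(Z.of_nat (length L))) in *.
      assert (0 < P)%Z by (apply Z.pow_pos_nonneg; lia).
      destruct (Z_lt_le_dec (4*P) (Z.abs n)) as [|Hle]; [assumption|exfalso].
      assert (Z.abs n * Z.abs n * Z.abs n <= 4 * (Z.abs n * Z.abs n) * P)%Z.
      { replace (4 * (Z.abs n * Z.abs n) * P)%Z with (Z.abs n * Z.abs n * (4*P))%Z by ring.
        apply Z.mul_le_mono_nonneg_l; [nia|exact Hle]. }
      lia. }
    simpl length. apply real_final. exact Hk.
Qed.
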